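(* Let $\mathbb{X}$ be a Cartesian $k$-differential abstract Kleisli category with differential combinator $\mathsf{D}$ and abstract Kleisli structure $(\mathsf{S},\epsilon,\vartheta)$. Then the monad $\mathbb{S}=(\mathsf{S},\delta,\vartheta)$ on $\vartheta\text{-}\mathsf{nat}[\mathbb{X}]$, where $\delta_A=\mathsf{S}(\epsilon_A)$, is a Cartesian $k$-differential monad on the Cartesian $k$-differential category $\vartheta\text{-}\mathsf{nat}[\mathbb{X}]$ (with structure inherited from $\mathbb{X}$). Furthermore, the isomorphism of categories $\mathsf{G}_\vartheta:\mathbb{X}\to\mathsf{KL}(\mathbb{S})$, identity on objects and given on $f:A\to B$ by $\llbracket\mathsf{G}_\vartheta(f)\rrbracket=\mathsf{S}(f)\circ\vartheta_A$ (with inverse $\mathsf{G}^{-1}_\vartheta(\llbracket f\rrbracket)=\epsilon_B\circ\llbracket f\rrbracket$), is a strict Cartesian $k$-differential functor, as is its inverse, where $\mathsf{KL}(\mathbb{S})$ carries the Cartesian $k$-differential structure lifted from $\vartheta\text{-}\mathsf{nat}[\mathbb{X}]$ (products of objects as in the base, $\llbracket\pi_j\rrbracket=\vartheta_{A_j}\circ\pi_j$, $\llbracket\langle f_1,\dots,f_n\rangle\rrbracket=\omega^{-1}\circ\langle\llbracket f_1\rrbracket,\dots,\llbracket f_n\rrbracket\rangle$, $k$-module structure inherited, and $\llbracket\mathsf{D}_\mathbb{S}[f]\rrbracket=\mathsf{D}[\llbracket f\rrbracket]$). Hence $\mathbb{X}\cong\mathsf{KL}(\mathbb{S})$ as Cartesian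 $k$-differential categories.
   Context: Fix a commutative semiring $k$. A left $k$-linear category is a category $\mathbb{X}$ in which each hom-set $\mathbb{X}(A,B)$ is a $k$-module (scalar multiplication $r\cdot f$, addition $+$, zero $0$) such that precomposition is $k$-linear: $(r\cdot f+s\cdot g)\circ x=r\cdot(f\circ x)+s\cdot(g\circ x)$. A map $f$ is $k$-linear if $f\circ(r\cdot x+s\cdot y)=r\cdot(f\circ x)+s\cdot(f\circ y)$ for all suitable $x,y$ and $r,s\in k$. A Cartesian left $k$-linear category is a left $k$-linear category with finite products (terminal object $\ast$, projections $\pi_j:A_1\times\cdots\times A_n\to A_j$, pairing $\langle-,\dots,-\rangle$) in which all projections are $k$-linear. A Cartesian $k$-differential category is a Cartesian left $k$-linear category equipped with a differential combinator $\mathsf{D}$ assigning to each $f:A\to B$ a map $\mathsf{D}[f]:A\times A\to B$ such that: [CD.1] $\mathsf{D}[r\cdot f+s\cdot g]=r\cdot\mathsf{D}[f]+s\cdot\mathsf{D}[g]$; [CD.2] $\mathsf{D}[f]\circ\langle\pi_1,r\cdot\pi_2+s\cdot\pi_3\rangle=r\cdot(\mathsf{D}[f]\circ\langle\pi_1,\pi_2\rangle)+s\cdot(\mathsf{D}[f]\circ\langle\pi_1,\pi_3\rangle)$ (as maps $A\times A\times A\to B$); [CD.3] $\mathsf{D}[1_A]=\pi_2$ and, for $\pi_j:A_1\times\cdots\times A_n\to A_j$, $\mathsf{D}[\pi_j]=\pi_{n+j}$; [CD.4] $\mathsf{D}[\langle f_1,\dots,f_n\rangle]=\langle\mathsf{D}[f_1],\dots,\mathsf{D}[f_n]\rangle$;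 [CD.5] $\mathsf{D}[g\circ f]=\mathsf{D}[g]\circ\langle f\circ\pi_1,\mathsf{D}[f]\rangle$; [CD.6] $\mathsf{D}[\mathsf{D}[f]]\circ\langle\pi_1,0,0,\pi_2\rangle=\mathsf{D}[f]$; [CD.7] $\mathsf{D}[\mathsf{D}[f]]\circ\langle\pi_1,\pi_2,\pi_3,\pi_4\rangle=\mathsf{D}[\mathsf{D}[f]]\circ\langle\pi_1,\pi_3,\pi_2,\pi_4\rangle$ (identifying $(A\times A)\times(A\times A)$ with $A\times A\times A\times A$). A map $f$ is $\mathsf{D}$-linear if $\mathsf{D}[f]=f\circ\pi_2$. For Cartesian left $k$-linear categories $\mathbb{X},\mathbb{Y}$, a strong Cartesian $k$-linear functor is a functor $\mathsf{F}:\mathbb{X}\to\mathbb{Y}$ such that $\mathsf{F}(\ast)\to\ast$ is an isomorphism, the canonical maps $\omega_{A_1,\dots,A_n}=\langle\mathsf{F}(\pi_1),\dots,\mathsf{F}(\pi_n)\rangle:\mathsf{F}(A_1\times\cdots\times A_n)\to\mathsf{F}(A_1)\times\cdots\times\mathsf{F}(A_n)$ are isomorphisms, and $\mathsf{F}(r\cdot f+s\cdot g)=r\cdot\mathsf{F}(f)+s\cdot\mathsf{F}(g)$. It is strict if moreover $\omega$ is the identity. For Cartesian $k$-differential categories, a strong Cartesian $k$-differential functor is a strong Cartesian $k$-linear functor with $\mathsf{D}[\mathsf{F}(f)]=\mathsf{F}(\mathsf{D}[f])\circ\omega^{-1}_{A,A}$ for all $f:A\to B$; a strict Cartesian $k$-differential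 functor is a strict Cartesian $k$-linear functor with $\mathsf{D}[\mathsf{F}(f)]=\mathsf{F}(\mathsf{D}[f])$. A Cartesian $k$-differential monad on a Cartesian $k$-differential category $\mathbb{X}$ is a monad $\mathbb{S}=(\mathsf{S},\mu,\eta)$ on $\mathbb{X}$ such that $\mathsf{S}$ is a strong Cartesian $k$-differential functor and every $\eta_A$ and $\mu_A$ is $\mathsf{D}$-linear. Kleisli category notation: $\mathsf{KL}(\mathbb{S})$ has the objects of the base and a map $f:A\to B$ is a base map $\llbracket f\rrbracket:A\to\mathsf{S}(B)$; identities $\llbracket 1_A\rrbracket=\eta_A$, composition $\llbracket g\circ f\rrbracket=\mu_C\circ\mathsf{S}(\llbracket g\rrbracket)\circ\llbracket f\rrbracket$. An abstract Kleisli structure on a category $\mathbb{X}$ is a triple $(\mathsf{S},\epsilon,\vartheta)$ of an endofunctor $\mathsf{S}$, a natural transformation $\epsilon_A:\mathsf{S}(A)\to A$, and a family of maps $\vartheta_A:A\to\mathsf{S}(A)$ (not necessarily natural) such that $\vartheta_{\mathsf{S}(A)}$ is natural in $A$ and $\epsilon_A\circ\vartheta_A=1_A$, $\epsilon_{\mathsf{S}(A)}\circ\mathsf{S}(\vartheta_A)=1_{\mathsf{S}(A)}$, $\vartheta_{\mathsf{S}(A)}\circ\vartheta_A=\mathsf{S}(\vartheta_A)\circ\vartheta_A$. A map $f:A\to B$ is $\vartheta$-natural if $\vartheta_B\circ f=\mathsf{S}(f)\circ\vartheta_A$; $\vartheta\text{-}\mathsf{nat}[\mathbb{X}]$ denotes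 the subcategory of $\vartheta$-natural maps. It is known (Führmann) that $\mathsf{S}$ restricts to an endofunctor of $\vartheta\text{-}\mathsf{nat}[\mathbb{X}]$, that $(\mathsf{S},\delta,\vartheta)$ with $\delta_A=\mathsf{S}(\epsilon_A)$ is a monad on $\vartheta\text{-}\mathsf{nat}[\mathbb{X}]$, and that $\mathsf{G}_\vartheta$ as in the claim is an isomorphism of categories. A Cartesian $k$-differential abstract Kleisli category is a Cartesian $k$-differential category $\mathbb{X}$ with an abstract Kleisli structure $(\mathsf{S},\epsilon,\vartheta)$ such that all projections are $\vartheta$-natural, $\mathsf{S}$ is a strong Cartesian $k$-differential functor, and every $\epsilon_A$ and $\vartheta_A$ is $\mathsf{D}$-linear. In this situation $\vartheta\text{-}\mathsf{nat}[\mathbb{X}]$ is a sub-Cartesian $k$-differential category of $\mathbb{X}$. *)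

(* Defs.v *)
(* Axioms are stated as Prop predicates
   relative to a predicate [P] on maps which picks out a (wide) subcategory;
   the whole category is [allMaps X].  This lets us speak of the subcategory
   theta-nat[X] and of the Kleisli category (whose maps are theta-natural maps
   A -> S B) without building subtypes. *)
From HB Require Import structures.
From mathcomp Require Import all_boot all_algebra.
Set Implicit Arguments. Unset Strict Implicit. Unset Printing Implicit Defensive.
Import GRing.Theory.
Local Open Scope ring_scope.

Record CartObs := { ob :> Type; cterm : ob; cprod : ob -> ob -> ob }.
Arguments cterm {c}.
Arguments cprod {c}.

Record RawCDC (k : pzSemiRingType) (O : CartObs) := {
  Mor : O -> O -> lSemiModType k;
  idc : forall A, Mor A A;
  cmp : forall A B C, Mor B C -> Mor A B -> Mor A C;
  pj1 : forall A B, Mor (cprod A B) A;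
  pj2 : forall A B, Mor (cprod A B) B;
  pairing : forall C A B, Mor C A -> Mor C B -> Mor C (cprod A B);
  bang : forall A, Mor A cterm;
  D : forall A B, Mor A B -> Mor (cprod A A) B
}.
Arguments Mor {k O} r A B.
Arguments idc {k O} r A.
Arguments cmp {k O} r {A B C}.
Arguments pj1 {k O} r A B.
Arguments pj2 {k O} r A B.
Arguments pairing {k O} r {C A B}.
Arguments bang {k O} r A.
Arguments D {k O} r {A B}.

Section Defs.
Variables (k : pzSemiRingType) (O : CartObs).

Definition homP (X : RawCDC k O) := forall A B, Mor X A B -> Prop.
Definition allMaps (X : RawCDC k O) : homP X := fun _ _ _ => True.
Arguments allMaps X : clear implicits.

Definition is_inverse (X : RawCDC k O) A B (f : Mor X A B) (g : Mor X B A) :=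
  cmp X g f = idc X A /\ cmp X f g = idc X B.

Definition D_linear (X : RawCDC k O) A B (f : Mor X A B) :=
  D X f = cmp X f (pj2 X A A).

Record is_CDC_on (X : RawCDC k O) (P : homP X) : Prop := {
  cl_id : forall A, P _ _ (idc X A);
  cl_comp : forall A B C (g : Mor X B C) (f : Mor X A B),
      P _ _ f -> P _ _ g -> P _ _ (cmp X g f);
  cl_p1 : forall A B, P _ _ (pj1 X A B);
  cl_p2 : forall A B, P _ _ (pj2 X A B);
  cl_pair : forall C A B (f : Mor X C A) (g : Mor X C B),
      P _ _ f -> P _ _ g -> P _ _ (pairing X f g);
  cl_bang : forall A, P _ _ (bang X A);
  cl_zero : forall A B, P _ _ (0 : Mor X A B);
  cl_lin : forall A B (r s : k) (f g : Mor X A B),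
      P _ _ f -> P _ _ g -> P _ _ (r *: f + s *: g);
  cl_D : forall A B (f : Mor X A B), P _ _ f -> P _ _ (D X f);
  cat_assoc : forall A B C E (f : Mor X A B) (g : Mor X B C) (h : Mor X C E),
      P _ _ f -> P _ _ g -> P _ _ h ->
      cmp X h (cmp X g f) = cmp X (cmp X h g) f;
  cat_idl : forall A B (f : Mor X A B), P _ _ f -> cmp X (idc X B) f = f;
  cat_idr : forall A B (f : Mor X A B), P _ _ f -> cmp X f (idc X A) = f;
  term_uniq : forall A (f : Mor X A cterm), P _ _ f -> f = bang X A;
  prod_beta1 : forall C A B (f : Mor X C A) (g : Mor X C B),
      P _ _ f -> P _ _ g -> cmp X (pj1 X A B) (pairing X f g) = f;
  prod_beta2 : forall C A B (f : Mor X C A) (g : Mor X C B),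
      P _ _ f -> P _ _ g -> cmp X (pj2 X A B) (pairing X f g) = g;
  prod_eta : forall C A B (h : Mor X C (cprod A B)), P _ _ h ->
      pairing X (cmp X (pj1 X A B) h) (cmp X (pj2 X A B) h) = h;
  left_lin : forall A B C (f g : Mor X B C) (x : Mor X A B) (r s : k),
      P _ _ f -> P _ _ g -> P _ _ x ->
      cmp X (r *: f + s *: g) x = r *: cmp X f x + s *: cmp X g x;
  p1_lin : forall C A B (x y : Mor X C (cprod A B)) (r s : k),
      P _ _ x -> P _ _ y ->
      cmp X (pj1 X A B) (r *: x + s *: y)
      = r *: cmp X (pj1 X A B) x + s *: cmp X (pj1 X A B) y;
  p2_lin : forall C A B (x y : Mor X C (cprod A B)) (r s : k),
      P _ _ x -> P _ _ y ->
      cmp X (pj2 X A B) (r *: x + s *: y)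
      = r *: cmp X (pj2 X A B) x + s *: cmp X (pj2 X A B) y;
  CD1 : forall A B (f g : Mor X A B) (r s : k), P _ _ f -> P _ _ g ->
      D X (r *: f + s *: g) = r *: D X f + s *: D X g;
  CD2 : forall A B (f : Mor X A B) (r s : k), P _ _ f ->
      let q1 := pj1 X A (cprod A A) in
      let q2 := cmp X (pj1 X A A) (pj2 X A (cprod A A)) in
      let q3 := cmp X (pj2 X A A) (pj2 X A (cprod A A)) in
      cmp X (D X f) (pairing X q1 (r *: q2 + s *: q3))
      = r *: cmp X (D X f) (pairing X q1 q2) + s *: cmp X (D X f) (pairing X q1 q3);
  CD3_id : forall A, D X (idc X A) = pj2 X A A;
  CD3_p1 : forall A B, D X (pj1 X A B) = cmp X (pj1 X A B) (pj2 X (cprod A B) (cprod A B));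
  CD3_p2 : forall A B, D X (pj2 X A B) = cmp X (pj2 X A B) (pj2 X (cprod A B) (cprod A B));
  CD4 : forall C A B (f : Mor X C A) (g : Mor X C B), P _ _ f -> P _ _ g ->
      D X (pairing X f g) = pairing X (D X f) (D X g);
  CD5 : forall A B C (f : Mor X A B) (g : Mor X B C), P _ _ f -> P _ _ g ->
      D X (cmp X g f) = cmp X (D X g) (pairing X (cmp X f (pj1 X A A)) (D X f));
  CD6 : forall A B (f : Mor X A B), P _ _ f ->
      cmp X (D X (D X f))
        (pairing X (pairing X (pj1 X A A) 0) (pairing X 0 (pj2 X A A))) = D X f;
  CD7 : forall A B (f : Mor X A B), P _ _ f ->
      let pi1 := cmp X (pj1 X A A) (pj1 X (cprod A A) (cprod A A)) in
      let pi2 := cmp X (pj2 X A A) (pj1 X (cprod A A) (cprod A A)) in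
      let pi3 := cmp X (pj1 X A A) (pj2 X (cprod A A) (cprod A A)) in
      let pi4 := cmp X (pj2 X A A) (pj2 X (cprod A A) (cprod A A)) in
      cmp X (D X (D X f)) (pairing X (pairing X pi1 pi2) (pairing X pi3 pi4))
      = cmp X (D X (D X f)) (pairing X (pairing X pi1 pi3) (pairing X pi2 pi4))
}.

Section Endo.
Variables (X : RawCDC k O) (Sob : O -> O)
          (Smap : forall A B, Mor X A B -> Mor X (Sob A) (Sob B)).
Arguments Smap {A B}.

Definition omega A B : Mor X (Sob (cprod A B)) (cprod (Sob A) (Sob B)) :=
  pairing X (Smap (pj1 X A B)) (Smap (pj2 X A B)).

Record is_strong_CD_endo (P : homP X) : Prop := {
  se_pres : forall A B (f : Mor X A B), P _ _ f -> P _ _ (Smap f);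
  se_id : forall A, Smap (idc X A) = idc X (Sob A);
  se_comp : forall A B C (f : Mor X A B) (g : Mor X B C), P _ _ f -> P _ _ g ->
      Smap (cmp X g f) = cmp X (Smap g) (Smap f);
  se_term_iso : exists u : Mor X cterm (Sob cterm),
      P _ _ u /\ is_inverse (bang X (Sob cterm)) u;
  se_omega_iso : forall A B, exists w : Mor X (cprod (Sob A) (Sob B)) (Sob (cprod A B)),
      P _ _ w /\ is_inverse (omega A B) w;
  se_lin : forall A B (f g : Mor X A B) (r s : k), P _ _ f -> P _ _ g ->
      Smap (r *: f + s *: g) = r *: Smap f + s *: Smap g;
  se_D : forall A B (f : Mor X A B), P _ _ f ->
      forall w : Mor X (cprod (Sob A) (Sob A)) (Sob (cprod A A)),
      P _ _ w -> is_inverse (omega A A) w ->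
      D X (Smap f) = cmp X (Smap (D X f)) w
}.

Record is_monad_on (P : homP X) (mu : forall A, Mor X (Sob (Sob A)) (Sob A))
    (eta : forall A, Mor X A (Sob A)) : Prop := {
  mo_pres : forall A B (f : Mor X A B), P _ _ f -> P _ _ (Smap f);
  mo_id : forall A, Smap (idc X A) = idc X (Sob A);
  mo_comp : forall A B C (f : Mor X A B) (g : Mor X B C), P _ _ f -> P _ _ g ->
      Smap (cmp X g f) = cmp X (Smap g) (Smap f);
  mo_muP : forall A, P _ _ (mu A);
  mo_etaP : forall A, P _ _ (eta A);
  mo_mu_nat : forall A B (f : Mor X A B), P _ _ f ->
      cmp X (mu B) (Smap (Smap f)) = cmp X (Smap f) (mu A);
  mo_eta_nat : forall A B (f : Mor X A B), P _ _ f ->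
      cmp X (eta B) f = cmp X (Smap f) (eta A);
  mo_assoc : forall A, cmp X (mu A) (Smap (mu A)) = cmp X (mu A) (mu (Sob A));
  mo_unitl : forall A, cmp X (mu A) (eta (Sob A)) = idc X (Sob A);
  mo_unitr : forall A, cmp X (mu A) (Smap (eta A)) = idc X (Sob A)
}.

Definition is_CD_monad_on (P : homP X) mu eta :=
  is_monad_on P mu eta /\ is_strong_CD_endo P /\
  (forall A, D_linear (mu A)) /\ (forall A, D_linear (eta A)).

Record is_abstract_kleisli (eps : forall A, Mor X (Sob A) A)
    (theta : forall A, Mor X A (Sob A)) : Prop := {
  ak_id : forall A, Smap (idc X A) = idc X (Sob A);
  ak_comp : forall A B C (f : Mor X A B) (g : Mor X B C),
      Smap (cmp X g f) = cmp X (Smap g) (Smap f);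
  ak_eps_nat : forall A B (f : Mor X A B),
      cmp X (eps B) (Smap f) = cmp X f (eps A);
  ak_thetaS_nat : forall A B (f : Mor X A B),
      cmp X (theta (Sob B)) (Smap f) = cmp X (Smap (Smap f)) (theta (Sob A));
  ak_eq1 : forall A, cmp X (eps A) (theta A) = idc X A;
  ak_eq2 : forall A, cmp X (eps (Sob A)) (Smap (theta A)) = idc X (Sob A);
  ak_eq3 : forall A, cmp X (theta (Sob A)) (theta A)
                    = cmp X (Smap (theta A)) (theta A)
}.

Definition thetanat (theta : forall A, Mor X A (Sob A)) : homP X :=
  fun A B f => cmp X (theta B) f = cmp X (Smap f) (theta A).

Record is_CD_abstract_kleisli (eps : forall A, Mor X (Sob A) A)
    (theta : forall A, Mor X A (Sob A)) : Prop := {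
  cak_CDC : is_CDC_on (allMaps X);
  cak_AK : is_abstract_kleisli eps theta;
  cak_p1 : forall A B, thetanat theta (pj1 X A B);
  cak_p2 : forall A B, thetanat theta (pj2 X A B);
  cak_strong : is_strong_CD_endo (allMaps X);
  cak_eps : forall A, D_linear (eps A);
  cak_theta : forall A, D_linear (theta A)
}.

(* The Kleisli category of (Sob, Smap, mu, eta), with the lifted Cartesian
   k-differential structure; [winv] is omega^{-1} and [u] is the inverse of
   S(cterm) -> cterm. *)
Definition KL (mu : forall A, Mor X (Sob (Sob A)) (Sob A))
    (eta : forall A, Mor X A (Sob A))
    (winv : forall A B, Mor X (cprod (Sob A) (Sob B)) (Sob (cprod A B)))
    (u : Mor X cterm (Sob cterm)) : RawCDC k O := {|
  Mor := fun A B => Mor X A (Sob B);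
  idc := eta;
  cmp := fun A B C g f => cmp X (mu C) (cmp X (Smap g) f);
  pj1 := fun A B => cmp X (eta A) (pj1 X A B);
  pj2 := fun A B => cmp X (eta B) (pj2 X A B);
  pairing := fun C A B f g => cmp X (winv A B) (pairing X f g);
  bang := fun A => cmp X u (bang X A);
  D := fun A B f => D X f
|}.

End Endo.

Record is_strict_CD_functor (X Y : RawCDC k O) (P : homP X) (Q : homP Y)
    (F : forall A B, Mor X A B -> Mor Y A B) : Prop := {
  sf_pres : forall A B (f : Mor X A B), P _ _ f -> Q _ _ (F _ _ f);
  sf_id : forall A, F _ _ (idc X A) = idc Y A;
  sf_comp : forall A B C (f : Mor X A B) (g : Mor X B C), P _ _ f -> P _ _ g ->
      F _ _ (cmp X g f) = cmp Y (F _ _ g) (F _ _ f);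
  (* F(cterm) -> cterm is the identity *)
  sf_term : bang Y cterm = idc Y cterm;
  (* omega_{A,B} = <F(pj1), F(pj2)> is the identity *)
  sf_omega : forall A B,
      pairing Y (F _ _ (pj1 X A B)) (F _ _ (pj2 X A B)) = idc Y (cprod A B);
  sf_lin : forall A B (f g : Mor X A B) (r s : k), P _ _ f -> P _ _ g ->
      F _ _ (r *: f + s *: g) = r *: F _ _ f + s *: F _ _ g;
  sf_D : forall A B (f : Mor X A B), P _ _ f -> D Y (F _ _ f) = F _ _ (D X f)
}.

End Defs.

Arguments allMaps {k O} X A B _.
Arguments thetanat {k O X Sob} Smap theta A B _.

(* Main.v *)
Require Import Defs.
From HB Require Import structures.
From mathcomp Require Import all_boot all_algebra.
Import GRing.Theory.
Local Open Scope ring_scope.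

Section Main.
Variables (k : comPzSemiRingType) (O : CartObs) (X : RawCDC k O)
    (Sob : O -> O) (Smap : forall A B, Mor X A B -> Mor X (Sob A) (Sob B))
    (eps : forall A, Mor X (Sob A) A) (theta : forall A, Mor X A (Sob A)).
Set Implicit Arguments. Unset Strict Implicit.
Hypothesis H : is_CD_abstract_kleisli Smap eps theta.

Let CX := cak_CDC H.
Let AK := cak_AK H.
Let SE := cak_strong H.
Local Notation Sm f := (Smap _ _ f).

Lemma assoc A B C E (f : Mor X A B) (g : Mor X B C) (h : Mor X C E) :
  cmp X h (cmp X g f) = cmp X (cmp X h g) f.
Proof. exact: (cat_assoc CX I I I). Qed.
Lemma idl A B (f : Mor X A B) : cmp X (idc X B) f = f.
Proof. exact: (cat_idl CX I). Qed.
Lemma idr A B (f : Mor X A B) : cmp X f (idc X A) = f.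
Proof. exact: (cat_idr CX I). Qed.
Lemma beta1 C A B (f : Mor X C A) (g : Mor X C B) : cmp X (pj1 X A B) (pairing X f g) = f.
Proof. exact: (prod_beta1 CX I I). Qed.
Lemma beta2 C A B (f : Mor X C A) (g : Mor X C B) : cmp X (pj2 X A B) (pairing X f g) = g.
Proof. exact: (prod_beta2 CX I I). Qed.
Lemma peta C A B (h : Mor X C (cprod A B)) :
  pairing X (cmp X (pj1 X A B) h) (cmp X (pj2 X A B) h) = h.
Proof. exact: (prod_eta CX I). Qed.
Lemma llin A B C (f g : Mor X B C) (x : Mor X A B) (r s : k) :
  cmp X (r *: f + s *: g) x = r *: cmp X f x + s *: cmp X g x.
Proof. exact: (left_lin CX _ _ I I I). Qed.
Lemma cmp0l A B C (x : Mor X A B) : cmp X (0 : Mor X B C) x = 0.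
Proof. by have := llin (C:=C) 0 0 x 0 0; rewrite !scale0r !addr0. Qed.
Lemma pair_comp C' C A B (f : Mor X C A) (g : Mor X C B) (h : Mor X C' C) :
  cmp X (pairing X f g) h = pairing X (cmp X f h) (cmp X g h).
Proof. by rewrite -[LHS]peta !assoc beta1 beta2. Qed.
Lemma pair_ext C A B (a b : Mor X C (cprod A B)) :
  cmp X (pj1 X A B) a = cmp X (pj1 X A B) b ->
  cmp X (pj2 X A B) a = cmp X (pj2 X A B) b -> a = b.
Proof. by move=> e1 e2; rewrite -(peta a) -(peta b) e1 e2. Qed.

Lemma Dlin_lin A B (f : Mor X A B) : D_linear f ->
  forall C (x y : Mor X C A) (r s : k),
  cmp X f (r *: x + s *: y) = r *: cmp X f x + s *: cmp X f y.
Proof.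
move=> Df C x y r s.
have := CD2 CX r s (I : allMaps X _ _ f); rewrite /= Df -!assoc !beta2 => E.
have := congr1 (fun z => cmp X z (pairing X x (pairing X x y))) E.
rewrite llin -!assoc llin -!assoc !beta2 !beta1 //.
Qed.

Lemma Dlin0 A B (f : Mor X A B) : D_linear f -> forall C, cmp X f (0 : Mor X C A) = 0.
Proof. by move=> Df C; have := Dlin_lin Df (C:=C) 0 0 0 0; rewrite !scale0r !addr0. Qed.

Lemma S0 A B : Sm (0 : Mor X A B) = 0.
Proof. by have := se_lin SE (A:=A) (B:=B) (f:=0) (g:=0) 0 0 I I; rewrite !scale0r !addr0. Qed.

Lemma Sid A : Sm (idc X A) = idc X (Sob A).
Proof. exact: (ak_id AK A). Qed.
Lemma Scomp A B C (f : Mor X A B) (g : Mor X B C) : Sm (cmp X g f) = cmp X (Sm g) (Sm f).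
Proof. exact: (ak_comp AK f g). Qed.
Lemma epsnat A B (f : Mor X A B) : cmp X (eps B) (Sm f) = cmp X f (eps A).
Proof. exact: (ak_eps_nat AK f). Qed.
Lemma thSnat A B (f : Mor X A B) :
  cmp X (theta (Sob B)) (Sm f) = cmp X (Sm (Sm f)) (theta (Sob A)).
Proof. exact: (ak_thetaS_nat AK f). Qed.
Lemma eq1 A : cmp X (eps A) (theta A) = idc X A.
Proof. exact: (ak_eq1 AK A). Qed.
Lemma eq2 A : cmp X (eps (Sob A)) (Sm (theta A)) = idc X (Sob A).
Proof. exact: (ak_eq2 AK A). Qed.
Lemma eq3 A : cmp X (theta (Sob A)) (theta A) = cmp X (Sm (theta A)) (theta A).
Proof. exact: (ak_eq3 AK A). Qed.

Lemma unitl A : cmp X (Sm (eps A)) (theta (Sob A)) = idc X (Sob A).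
Proof.
rewrite -[LHS]idl -(eq2 A) -assoc [cmp X (Sm _) (cmp X _ _)]assoc -Scomp.
by rewrite -epsnat eq2 Sid idl eq1.
Qed.

Lemma intoST A (x y : Mor X A (Sob cterm)) : x = y.
Proof.
have [u [_ [Hu _]]] := se_term_iso SE.
rewrite -(idl x) -(idl y) -Hu -!assoc.
by rewrite (term_uniq CX (I : allMaps X _ _ (cmp X _ x))) (term_uniq CX (I : allMaps X _ _ (cmp X _ y))).
Qed.

Lemma intoSST A (x y : Mor X A (Sob (Sob cterm))) : x = y.
Proof.
have [u [_ [Hu _]]] := se_term_iso SE.
have E : cmp X (Sm u) (Sm (bang X (Sob cterm))) = idc X _ by rewrite -Scomp Hu Sid.
rewrite -(idl x) -(idl y) -E -!assoc.
by congr (cmp X _ _); apply: intoST.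
Qed.

Lemma omega_mono A B C (a b : Mor X C (Sob (cprod A B))) :
  cmp X (Sm (pj1 X A B)) a = cmp X (Sm (pj1 X A B)) b ->
  cmp X (Sm (pj2 X A B)) a = cmp X (Sm (pj2 X A B)) b -> a = b.
Proof.
move=> e1 e2; have [w [_ [Hw _]]] := se_omega_iso SE A B.
rewrite -(idl a) -(idl b) -Hw -!assoc /omega !pair_comp e1 e2 //.
Qed.

Lemma omega2_mono A B C (a b : Mor X C (Sob (Sob (cprod A B)))) :
  cmp X (Sm (Sm (pj1 X A B))) a = cmp X (Sm (Sm (pj1 X A B))) b ->
  cmp X (Sm (Sm (pj2 X A B))) a = cmp X (Sm (Sm (pj2 X A B))) b -> a = b.
Proof.
move=> e1 e2; have [w [_ [Hw _]]] := se_omega_iso SE A B.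
have E : cmp X (Sm w) (Sm (omega Smap A B)) = idc X _ by rewrite -Scomp Hw Sid.
rewrite -(idl a) -(idl b) -E -!assoc; congr (cmp X _ _).
apply: omega_mono; rewrite !assoc -!Scomp /omega ?beta1 ?beta2 //.
Qed.

Lemma thp1 A B : cmp X (theta A) (pj1 X A B) = cmp X (Sm (pj1 X A B)) (theta _).
Proof. exact: (cak_p1 H A B). Qed.
Lemma thp2 A B : cmp X (theta B) (pj2 X A B) = cmp X (Sm (pj2 X A B)) (theta _).
Proof. exact: (cak_p2 H A B). Qed.

Lemma theta_prod A B (w : Mor X (cprod (Sob A) (Sob B)) (Sob (cprod A B))) :
  is_inverse (omega Smap A B) w ->
  theta (cprod A B) = cmp X w (pairing X (cmp X (theta A) (pj1 X A B)) (cmp X (theta B) (pj2 X A B))).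
Proof.
move=> [Hw _]; by rewrite thp1 thp2 -pair_comp assoc Hw idl.
Qed.

Lemma DG A B (f : Mor X A B) :
  D X (cmp X (Sm f) (theta A)) = cmp X (Sm (D X f)) (theta (cprod A A)).
Proof.
have [w [_ Hw]] := se_omega_iso SE A A.
rewrite (CD5 CX I I) (cak_theta H) (se_D SE I I Hw) -assoc; congr (cmp X _ _).
by rewrite (theta_prod Hw).
Qed.

Lemma Dtheta_cmp A B (f : Mor X A B) :
  D X (cmp X (theta B) f) = cmp X (theta B) (D X f).
Proof. by rewrite (CD5 CX I I) (cak_theta H) -assoc beta2. Qed.

Lemma Deps_cmp A B (f : Mor X A (Sob B)) :
  D X (cmp X (eps B) f) = cmp X (eps B) (D X f).
Proof. by rewrite (CD5 CX I I) (cak_eps H) -assoc beta2. Qed.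


Local Notation Pnat := (thetanat Smap theta).

Lemma Spj1w A B (w : Mor X (cprod (Sob A) (Sob B)) (Sob (cprod A B))) :
  is_inverse (omega Smap A B) w -> cmp X (Sm (pj1 X A B)) w = pj1 X _ _.
Proof. by move=> [_ Hw]; rewrite -(beta1 (Sm (pj1 X A B)) (Sm (pj2 X A B))) -assoc -/(omega Smap A B) Hw idr. Qed.
Lemma Spj2w A B (w : Mor X (cprod (Sob A) (Sob B)) (Sob (cprod A B))) :
  is_inverse (omega Smap A B) w -> cmp X (Sm (pj2 X A B)) w = pj2 X _ _.
Proof. by move=> [_ Hw]; rewrite -(beta2 (Sm (pj1 X A B)) (Sm (pj2 X A B))) -assoc -/(omega Smap A B) Hw idr. Qed.

Lemma Pnat_CDC : is_CDC_on Pnat.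
Proof.
constructor.
- by move=> A; rewrite /thetanat Sid idl idr.
- by move=> A B C g f Pf Pg; rewrite /thetanat assoc Pg -assoc Pf assoc -Scomp.
- by move=> A B; exact: thp1.
- by move=> A B; exact: thp2.
- move=> C A B f g Pf Pg; rewrite /thetanat; apply: omega_mono.
  + by rewrite !assoc -thp1 -Scomp -assoc !beta1.
  + by rewrite !assoc -thp2 -Scomp -assoc !beta2.
- by move=> A; apply: intoST.
- by move=> A B; rewrite /thetanat S0 cmp0l (Dlin0 (cak_theta H _)).
- move=> A B r s f g Pf Pg; rewrite /thetanat (Dlin_lin (cak_theta H _)) Pf Pg -llin.
  by rewrite (se_lin SE r s I I).
- by move=> A B f Pf; rewrite /thetanat -Dtheta_cmp Pf DG.
- by move=> *; apply: assoc.
- by move=> *; apply: idl.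
- by move=> *; apply: idr.
- by move=> A f _; apply: (term_uniq CX I).
- by move=> *; apply: beta1.
- by move=> *; apply: beta2.
- by move=> *; apply: peta.
- by move=> *; apply: llin.
- by move=> C A B x y r s _ _; apply: (p1_lin CX r s I I).
- by move=> C A B x y r s _ _; apply: (p2_lin CX r s I I).
- by move=> A B f g r s _ _; apply: (CD1 CX r s I I).
- by move=> A B f r s _; apply: (CD2 CX r s (I : allMaps X _ _ f)).
- exact: (CD3_id CX).
- exact: (CD3_p1 CX).
- exact: (CD3_p2 CX).
- by move=> C A B f g _ _; apply: (CD4 CX I I).
- by move=> A B C f g _ _; apply: (CD5 CX I I).
- by move=> A B f _; apply: (CD6 CX (I : allMaps X _ _ f)).
- by move=> A B f _; apply: (CD7 CX (I : allMaps X _ _ f)).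
Qed.

Lemma Pnat_monad : is_CD_monad_on Smap Pnat (fun A => Smap _ _ (eps A)) theta.
Proof.
split; [|split; [|split]].
- constructor.
  + by move=> A B f _; apply: thSnat.
  + exact: Sid.
  + by move=> A B C f g _ _; apply: Scomp.
  + by move=> A; apply: thSnat.
  + by move=> A; apply: eq3.
  + by move=> A B f _; rewrite -!Scomp epsnat.
  + by [].
  + by move=> A; rewrite -!Scomp epsnat.
  + exact: unitl.
  + by move=> A; rewrite -Scomp eq1 Sid.
- constructor.
  + by move=> A B f _; apply: thSnat.
  + exact: Sid.
  + by move=> A B C f g _ _; apply: Scomp.
  + have [u [_ Hu]] := se_term_iso SE; exists u; split=> //; exact: intoSST.
  + move=> A B; have [w [_ Hw]] := se_omega_iso SE A B; exists w; split=> //.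
    rewrite /thetanat; apply: omega2_mono.
    * by rewrite !assoc -thSnat -assoc (Spj1w Hw) -Scomp (Spj1w Hw) thp1.
    * by rewrite !assoc -thSnat -assoc (Spj2w Hw) -Scomp (Spj2w Hw) thp2.
  + by move=> A B f g r s _ _; apply: (se_lin SE r s I I).
  + by move=> A B f _ w _ Hw; apply: (se_D SE I I Hw).
- move=> A; have [w [_ Hw]] := se_omega_iso SE (Sob A) (Sob A).
  by rewrite /D_linear (se_D SE I I Hw) (cak_eps H) Scomp -assoc (Spj2w Hw).
- exact: (cak_theta H).
Qed.


Definition G A B (f : Mor X A B) : Mor X A (Sob B) := cmp X (Sm f) (theta A).

Lemma GP A B (f : Mor X A B) : Pnat A (Sob B) (G f).
Proof. by rewrite /thetanat /G assoc thSnat -assoc eq3 assoc -Scomp. Qed.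

Lemma GinvG A B (f : Mor X A B) : cmp X (eps B) (G f) = f.
Proof. by rewrite /G assoc epsnat -assoc eq1 idr. Qed.

Lemma exG A B (g : Mor X A (Sob B)) : Pnat A (Sob B) g -> g = G (cmp X (eps B) g).
Proof. by move=> Pg; rewrite /G Scomp -assoc -Pg assoc unitl idl. Qed.

Section KLsec.
Variables (winv : forall A B, Mor X (cprod (Sob A) (Sob B)) (Sob (cprod A B)))
          (u : Mor X cterm (Sob cterm)).
Hypothesis Hw : forall A B, is_inverse (omega Smap A B) (winv A B).
Hypothesis Hu : is_inverse (bang X (Sob cterm)) u.
Let KLS := KL Smap (fun A => Smap _ _ (eps A)) theta winv u.

Lemma G_id A : idc KLS A = G (idc X A).
Proof. by rewrite /G Sid idl. Qed.
Lemma G_pj1 A B : pj1 KLS A B = G (pj1 X A B).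
Proof. exact: thp1. Qed.
Lemma G_pj2 A B : pj2 KLS A B = G (pj2 X A B).
Proof. exact: thp2. Qed.
Lemma G_bang A : bang KLS A = G (bang X A).
Proof. exact: intoST. Qed.
Lemma G_0 A B : (0 : Mor KLS A B) = G (0 : Mor X A B).
Proof. by rewrite /G S0 cmp0l. Qed.
Lemma G_cmp A B C (f : Mor X A B) (g : Mor X B C) :
  cmp KLS (G g) (G f) = G (cmp X g f).
Proof.
rewrite /= /G !assoc -!Scomp; congr (cmp X (Smap _ _ _) _).
by rewrite !assoc epsnat -[cmp X (cmp X g _) _]assoc eq1 idr.
Qed.
Lemma G_pair C A B (f : Mor X C A) (g : Mor X C B) :
  pairing KLS (G f) (G g) = G (pairing X f g).
Proof.
rewrite /= /G -pair_comp.
have -> : pairing X (Sm f) (Sm g) = cmp X (omega Smap A B) (Sm (pairing X f g)).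
  by rewrite /omega pair_comp -!Scomp beta1 beta2.
by rewrite !assoc (proj1 (Hw A B)) idl.
Qed.
Lemma G_lin A B (f g : Mor X A B) (r s : k) :
  (r *: G f + s *: G g : Mor KLS A B) = G (r *: f + s *: g).
Proof. by rewrite /G -llin (se_lin SE r s I I). Qed.
Lemma G_D A B (f : Mor X A B) : D KLS (G f) = G (D X f).
Proof. exact: DG. Qed.


Let PKL : homP KLS := fun A B (g : Mor X A (Sob B)) => Pnat A (Sob B) g.

Lemma KLind A B (g : Mor KLS A B) : PKL g -> exists f : Mor X A B, g = G f.
Proof. move=> Pg; exists (cmp X (eps B) g); exact: exG. Qed.

Ltac tr := rewrite ?G_0 ?G_id ?G_pj1 ?G_pj2 ?G_bang; rewrite ?(G_cmp, G_pair, G_lin, G_D).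

Lemma KL_CDC : is_CDC_on PKL.
Proof.
constructor.
- by move=> A; tr; exact: GP.
- by move=> A B C g f /KLind [f' ->] /KLind [g' ->]; tr; exact: GP.
- by move=> A B; tr; exact: GP.
- by move=> A B; tr; exact: GP.
- by move=> C A B f g /KLind [f' ->] /KLind [g' ->]; tr; exact: GP.
- by move=> A; tr; exact: GP.
- by move=> A B; tr; exact: GP.
- by move=> A B r s f g /KLind [f' ->] /KLind [g' ->]; tr; exact: GP.
- by move=> A B f /KLind [f' ->]; tr; exact: GP.
- by move=> A B C E f g h /KLind [f' ->] /KLind [g' ->] /KLind [h' ->]; tr; rewrite assoc.
- by move=> A B f /KLind [f' ->]; tr; rewrite idl.
- by move=> A B f /KLind [f' ->]; tr; rewrite idr.
- by move=> A f _; apply: intoST.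
- by move=> C A B f g /KLind [f' ->] /KLind [g' ->]; tr; rewrite beta1.
- by move=> C A B f g /KLind [f' ->] /KLind [g' ->]; tr; rewrite beta2.
- by move=> C A B h /KLind [h' ->]; tr; rewrite peta.
- by move=> A B C f g x r s /KLind [f' ->] /KLind [g' ->] /KLind [x' ->]; tr; rewrite llin.
- by move=> C A B x y r s /KLind [x' ->] /KLind [y' ->]; tr; rewrite (p1_lin CX r s I I).
- by move=> C A B x y r s /KLind [x' ->] /KLind [y' ->]; tr; rewrite (p2_lin CX r s I I).
- by move=> A B f g r s /KLind [f' ->] /KLind [g' ->]; tr; rewrite (CD1 CX r s I I).
- move=> A B f r s /KLind [f' ->]; cbv zeta; tr.
  by rewrite (CD2 CX r s (I : allMaps X _ _ f')).
- by move=> A; tr; rewrite (CD3_id CX).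
- by move=> A B; tr; rewrite (CD3_p1 CX).
- by move=> A B; tr; rewrite (CD3_p2 CX).
- by move=> C A B f g /KLind [f' ->] /KLind [g' ->]; tr; rewrite (CD4 CX I I).
- by move=> A B C f g /KLind [f' ->] /KLind [g' ->]; tr; rewrite (CD5 CX I I).
- by move=> A B f /KLind [f' ->]; tr; rewrite (CD6 CX (I : allMaps X _ _ f')).
- by move=> A B f /KLind [f' ->]; cbv zeta; tr; rewrite (CD7 CX (I : allMaps X _ _ f')).
Qed.


Lemma G_functor : is_strict_CD_functor (allMaps X) PKL (fun A B f => G f).
Proof.
constructor.
- by move=> A B f _; exact: GP.
- by move=> A; rewrite G_id.
- by move=> A B C f g _ _; rewrite G_cmp.
- exact: intoST.
- by move=> A B; rewrite G_pair G_id -(peta (idc X _)) !idr.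
- by move=> A B f g r s _ _; rewrite G_lin.
- by move=> A B f _; rewrite G_D.
Qed.

Lemma Ginv_functor : is_strict_CD_functor PKL (allMaps X)
   (fun A B (g : Mor X A (Sob B)) => cmp X (eps B) g).
Proof.
constructor.
- by [].
- by move=> A; apply: eq1.
- by move=> A B C f g /KLind [f' ->] /KLind [g' ->]; rewrite G_cmp !GinvG.
- by rewrite (term_uniq CX (I : allMaps X _ _ (idc X cterm))).
- by move=> A B; rewrite G_pj1 G_pj2 !GinvG -(peta (idc X _)) !idr.
- by move=> A B f g r s /KLind [f' ->] /KLind [g' ->]; rewrite G_lin !GinvG.
- by move=> A B f _; rewrite /= Deps_cmp.
Qed.

End KLsec.
End Main.

Theorem mainTheorem6 (k : comPzSemiRingType) (O : CartObs) (X : RawCDC k O)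
    (Sob : O -> O) (Smap : forall A B, Mor X A B -> Mor X (Sob A) (Sob B))
    (eps : forall A, Mor X (Sob A) A) (theta : forall A, Mor X A (Sob A)) :
  is_CD_abstract_kleisli Smap eps theta ->
  let Pnat := thetanat Smap theta in
  let delta := fun A => Smap _ _ (eps A) in
  (* theta-nat[X] is a Cartesian k-differential category (inherited structure) *)
  is_CDC_on Pnat /\
  (* (S, delta, theta) is a Cartesian k-differential monad on theta-nat[X] *)
  is_CD_monad_on Smap Pnat delta theta /\
  (forall (winv : forall A B, Mor X (cprod (Sob A) (Sob B)) (Sob (cprod A B)))
          (u : Mor X cterm (Sob cterm)),
    (forall A B, is_inverse (omega Smap A B) (winv A B)) ->
    is_inverse (bang X (Sob cterm)) u ->
    let KLS := KL Smap delta theta winv u in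
    (* Kleisli maps are the theta-natural maps A -> S B *)
    let PKL : homP KLS := fun A B (g : Mor X A (Sob B)) => Pnat A (Sob B) g in
    let G := fun A B (f : Mor X A B) => cmp X (Smap _ _ f) (theta A) in
    let Ginv := fun A B (g : Mor X A (Sob B)) => cmp X (eps B) g in
    is_CDC_on PKL /\
    is_strict_CD_functor (allMaps X) PKL G /\
    is_strict_CD_functor PKL (allMaps X) Ginv /\
    (forall A B (f : Mor X A B), Ginv A B (G A B f) = f) /\
    (forall A B (g : Mor X A (Sob B)), PKL A B g -> G A B (Ginv A B g) = g)).
Proof.
move=> H Pnat delta.
split; first exact (Pnat_CDC H).
split; first exact (Pnat_monad H).
move=> winv u Hw Hu KLS PKL G0 Ginv.
split; first exact (@KL_CDC _ _ _ _ _ _ _ H winv u Hw).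
split; first exact (@G_functor _ _ _ _ _ _ _ H winv u Hw).
split; first exact (@Ginv_functor _ _ _ _ _ _ _ H winv u).
split; first by move=> A B f; exact: (GinvG H f).
by move=> A B g Pg; exact: (esym (exG H Pg)).
Qed.
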